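(* Let $\rho_k:\{1,\dots,\ell\}\times\mathbb{B}^n\to\overline{\mathbb{Q}}$ and let $(\sigma,\pi)$ be a strategy such that $\Psi_\pi(\rho_k)\ge\rho_k$. Let $\rho_{k+1}$ be the least fixed point of $\Psi_\pi$ greater than or equal to $\rho_k$ (original strategy evaluation), and let $\hat\rho$ be the result of the modified strategy evaluation, i.e. the least fixed point of $\hat\Psi_\pi$ greater than or equal to $\hat r_1$, where $\hat r_1(i,[\vec b]_i)=\Psi_\pi(\rho_k)(i,\vec b)$. Then for all $1\le i\le\ell$ and all $\vec b\in\mathbb{B}^n$, $\rho_{k+1}(i,\vec b)=\hat\rho(i,[\vec b]_i)$.
   Context: Setting: a program with rational variables $\vec x\in\mathbb{Q}^m$, Boolean variables $\vec b\in\mathbb{B}^n$ ($\mathbb{B}=\{0,1\}$), and transition relation $\exists\vec y\in\mathbb{Q}^E\,\exists\vec p\in\mathbb{B}^d.\ T$, where $T$ is a quantifier-free formula whose atoms are propositional literals over $\vec b,\vec b',\vec p$ and linear (in)equalities over $\vec x,\vec x',\vec y$, such that for each $\pi\in\mathbb{B}^d$, $T[\pi/\vec p]$ is the conjunction of a propositional formula in $\vec b,\vec b'$ and a conjunction $T_\pi$ of linear constraints in $\vec x,\vec x',\vec y$. Let $A\in\mathbb{Q}^{\ell\times m}$ be a template matrix with rows $A_1,\dots,A_\ell$, and $\overline{\mathbb{Q}}=\mathbb{Q}\cup\{\pm\infty\}$; functions $\{1,\dots,\ell\}\times\mathbb{B}^n\to\overline{\mathbb{Q}}$ are ordered pointwise,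 and $\rho(\vec b)$ denotes the vector $(\rho(1,\vec b),\dots,\rho(\ell,\vec b))$. A strategy assigns to each $(i',\vec b')$ either $\bot$ or a pair $(\sigma(i',\vec b'),\pi(i',\vec b'))\in\mathbb{B}^n\times\mathbb{B}^d$. The operator is $\Psi_\pi(\rho)(i',\vec b')=\sup\{A_{i'}\vec x':\exists\vec x,\vec y.\ T_{\pi(i',\vec b')}\wedge A\vec x\le\rho(\sigma(i',\vec b'))\}$, with value $-\infty$ when the strategy is $\bot$ at $(i',\vec b')$ or the set is empty. For each $i$, define the equivalence $\vec b_1\sim_i\vec b_2$ iff $\pi(i,\vec b_1)=\pi(i,\vec b_2)$ and $\sigma(i,\vec b_1)=\sigma(i,\vec b_2)$, and let $[\vec b]_i$ denote the class of $\vec b$. The modified evaluation works on functions $r$ assigning a value in $\overline{\mathbb{Q}}$ to each pair $(i,C)$ with $C$ a $\sim_i$-class, via $\hat\Psi_\pi(r)(i',[\vec b']_{i'})=\sup\{A_{i'}\vec x':\exists\vec x,\vec y.\ T_{\pi(i',\vec b')}\wedge\bigwedge_{j=1}^\ell A_j\vec x\le r(j,[\sigma(i',\vec b')]_j)\}$ (again $-\infty$ if the strategy is $\bot$), which is well defined since $\pi(i',\cdot),\sigma(i',\cdot)$ are constant on $\sim_{i'}$-classes. *)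

(* Defs.v *)
From HB Require Import structures.
From mathcomp Require Import all_boot all_order all_algebra.
From mathcomp Require Import constructive_ereal.
From Stdlib Require Import ClassicalEpsilon.
Set Implicit Arguments. Unset Strict Implicit. Unset Printing Implicit Defensive.
Import Order.TTheory GRing.Theory Num.Theory.
Local Open Scope ring_scope.

Definition Qbar := \bar rat.

Definition Bvec (k : nat) := {ffun 'I_k -> bool}.

(* A conjunction of (non-strict) linear constraints over x, x' in Q^m and
   y in Q^E :   Cx x + Cx' x' + Cy y <= c   (componentwise).
   Equalities are expressed as pairs of inequalities. *)
Record linsys (m E : nat) := LinSys {
  nc : nat;
  Cx : 'M[rat]_(nc, m);
  Cx' : 'M[rat]_(nc, m);
  Cy : 'M[rat]_(nc, E);
  cc : 'cV[rat]_nc }.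

Definition lsat (m E : nat) (S : linsys m E)
    (x x' : 'cV[rat]_m) (y : 'cV[rat]_E) : Prop :=
  forall k : 'I_(nc S), (Cx S *m x + Cx' S *m x' + Cy S *m y) k 0 <= cc S k 0.

Definition is_lub (S : Qbar -> Prop) (v : Qbar) : Prop :=
  (forall u, S u -> (u <= v)%E) /\
  (forall w, (forall u, S u -> (u <= w)%E) -> (v <= w)%E).

(* supremum in \bar Q (it exists for the polyhedral sets considered here;
   the sup of the empty set is -oo) *)
Definition qsup (S : Qbar -> Prop) : Qbar :=
  epsilon (inhabits +oo%E) (is_lub S).

(* a strategy: for each (i', b'), either bot (None) or (sigma, pi) *)
Definition strategy (l n d : nat) := 'I_l -> Bvec n -> option (Bvec n * Bvec d).

Section Ops.
Variables (m n d E l : nat) (A : 'M[rat]_(l, m)) (T : Bvec d -> linsys m E)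
  (st : strategy l n d).

Definition Arow (i : 'I_l) (x : 'cV[rat]_m) : rat := (A *m x) i 0.

Definition Psi (rho : 'I_l -> Bvec n -> Qbar) (i' : 'I_l) (b' : Bvec n) : Qbar :=
  match st i' b' with
  | None => -oo%E
  | Some (s, p) =>
      qsup (fun v => exists x x' y, lsat (T p) x x' y /\
              (forall j, ((Arow j x)%:E <= rho j s)%E) /\ v = (Arow i' x')%:E)
  end.

Definition eqcls (i : 'I_l) (b : Bvec n) : {set Bvec n} :=
  [set b' | st i b' == st i b].

Definition classes (i : 'I_l) : {set {set Bvec n}} := [set eqcls i b | b in [set: Bvec n]].

Definition cls (i : 'I_l) := {C : {set Bvec n} | C \in classes i}.

Definition cls_of (i : 'I_l) (b : Bvec n) : cls i :=
  exist _ (eqcls i b) (imset_f (eqcls i) (in_setT b)).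

Definition crep (i : 'I_l) (C : cls i) : Bvec n :=
  odflt [ffun=> false] [pick b in val C].

Definition Psihat (r : forall i : 'I_l, cls i -> Qbar) (i' : 'I_l) (C : cls i') : Qbar :=
  match st i' (crep C) with
  | None => -oo%E
  | Some (s, p) =>
      qsup (fun v => exists x x' y, lsat (T p) x x' y /\
              (forall j, ((Arow j x)%:E <= r j (cls_of j s))%E) /\ v = (Arow i' x')%:E)
  end.

End Ops.
Arguments Psihat [m n d E l] A T st r i' C.

Definition le_fun (l n : nat) (r1 r2 : 'I_l -> Bvec n -> Qbar) : Prop :=
  forall i b, (r1 i b <= r2 i b)%E.

Definition le_dfun (l : nat) (X : 'I_l -> Type) (r1 r2 : forall i, X i -> Qbar) : Prop :=
  forall i c, (r1 i c <= r2 i c)%E.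

Definition least_fp_above (U : Type) (le : U -> U -> Prop) (F : U -> U) (r0 r : U) : Prop :=
  F r = r /\ le r0 r /\ (forall r', F r' = r' -> le r0 r' -> le r r').

(* Main.v *)
From HB Require Import structures.
From mathcomp Require Import all_boot all_order all_algebra.
From mathcomp Require Import ring lra constructive_ereal.
Require Import Defs.
From Stdlib Require Import Classical ClassicalEpsilon FunctionalExtensionality PropExtensionality.
From Stdlib Require List.
Set Implicit Arguments. Unset Strict Implicit. Unset Printing Implicit Defensive.
Import Order.TTheory GRing.Theory Num.Theory.
Local Open Scope ring_scope.

Lemma ex_max (A : Type) (g : A -> rat) (s : seq A) (x : A) :
  List.In x s -> exists2 c, List.In c s & forall c', List.In c' s -> g c' <= g c.
Proof.
elim: s x => [|a s IH] x; first by []. move=> /= [_|Hx].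
  case: s IH => [|b s] IH.
    exists a; first by left.
    by move=> c' [<-|].
  have [c Hc Hm] := IH b (or_introl erefl).
  case: (lerP (g a) (g c)) => Hac.
    exists c; first by right.
    by move=> c' [<-|/Hm].
  exists a; first by left.
  by move=> c' [<-|/Hm H] => //; exact: le_trans H (ltW Hac).
have [c Hc Hm] := IH x Hx.
case: (lerP (g a) (g c)) => Hac.
  exists c; first by right.
  by move=> c' [<-|/Hm].
exists a; [by left | move=> c' [<-|/Hm H]] => //; exact: le_trans H (ltW Hac).
Qed.

Lemma ex_min (A : Type) (g : A -> rat) (s : seq A) (x : A) :
  List.In x s -> exists2 c, List.In c s & forall c', List.In c' s -> g c <= g c'.
Proof.
move=> /(ex_max (fun c => - g c)) [c Hc Hm]; exists c => // c' /Hm.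
by rewrite lerN2.
Qed.

Section FM.
Variable I : finType.
Definition lc := ((I -> rat) * rat)%type.
Definition hold (c : lc) (z : I -> rat) : Prop := \sum_i c.1 i * z i <= c.2.
Definition allh (L : seq lc) z := forall c, List.In c L -> hold c z.

Lemma allh_ext L z1 z2 : z1 =1 z2 -> allh L z1 -> allh L z2.
Proof.
move=> e H c /H; rewrite /hold; congr (_ <= _).
by apply: eq_bigr => i _; rewrite e.
Qed.

Definition upd (z : I -> rat) v u := fun i => if i == v then u else z i.
Definition Rs v (c : lc) z := \sum_(i | i != v) c.1 i * z i.

Lemma hold_split v c z : hold c z <-> c.1 v * z v + Rs v c z <= c.2.
Proof. by rewrite /hold (bigD1 v). Qed.

Lemma hold_upd v c z u : hold c (upd z v u) <-> c.1 v * u + Rs v c z <= c.2.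
Proof.
rewrite (hold_split v) /upd eqxx /Rs; suff -> : \sum_(i | i != v) c.1 i * (if i == v then u else z i)
  = \sum_(i | i != v) c.1 i * z i by [].
by apply: eq_bigr => i /negbTE ->.
Qed.

Definition comb v (p q : lc) : lc :=
  (fun i => (- q.1 v) * p.1 i + p.1 v * q.1 i, (- q.1 v) * p.2 + p.1 v * q.2).

Lemma Rs_comb v p q z : Rs v (comb v p q) z = (- q.1 v) * Rs v p z + p.1 v * Rs v q z.
Proof.
rewrite /Rs !mulr_sumr -big_split /=; apply: eq_bigr => i _; ring.
Qed.

Lemma fm (L : seq lc) (v : I) : exists L' : seq lc,
  (forall w, (forall c, List.In c L -> c.1 w = 0) -> forall c, List.In c L' -> c.1 w = 0) /\
  (forall c, List.In c L' -> c.1 v = 0) /\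
  forall z, allh L' z <-> exists u, allh L (upd z v u).
Proof.
set P := List.filter (fun c : lc => 0 < c.1 v) L.
set N := List.filter (fun c : lc => c.1 v < 0) L.
set Z := List.filter (fun c : lc => c.1 v == 0) L.
exists (Z ++ List.flat_map (fun p => List.map (comb v p) N) P).
have inL' c : List.In c (Z ++ List.flat_map (fun p => List.map (comb v p) N) P) ->
   (List.In c L /\ c.1 v = 0) \/ exists p q, [/\ List.In p L, 0 < p.1 v, List.In q L,
      q.1 v < 0 & c = comb v p q].
  move=> Hc; case: (List.in_app_or _ _ _ Hc) => {Hc}.
    by move/List.filter_In => [H /eqP H']; left.
  move/List.in_flat_map => [p [/List.filter_In [Hp Hp'] /List.in_map_iff [q [<- /List.filter_In [Hq Hq']]]]].
  by right; exists p, q.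
split; [|split].
- move=> w Hw c /inL' [[/Hw]//|[p [q [Hp _ Hq _ ->]]]].
  by rewrite /= (Hw _ Hp) (Hw _ Hq) !mulr0 addr0.
- move=> c /inL' [[_]//|[p [q [_ _ _ _ ->]]]]; rewrite /=; ring.
move=> z; split; last first.
  move=> [u Hu] c /inL' [[Hc Hc0]|[p [q [Hp Hp0 Hq Hq0 ->]]]].
    by move: (Hu _ Hc); rewrite hold_upd (hold_split v) Hc0 !mul0r.
  move: (Hu _ Hp) (Hu _ Hq); rewrite !hold_upd (hold_split v) Rs_comb => H1 H2.
  have e : (comb v p q).1 v = 0 by rewrite /=; ring.
  rewrite e mul0r add0r.
  have a0 : 0 <= - q.1 v by rewrite oppr_ge0 ltW.
  have b0 : 0 <= p.1 v by rewrite ltW.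
  have := lerD (ler_wpM2l a0 H1) (ler_wpM2l b0 H2).
  congr (_ <= _); rewrite /=; ring.
move=> H.
have HZ c u : List.In c L -> c.1 v = 0 -> hold c (upd z v u).
  move=> Hc Hc0; rewrite hold_upd Hc0 mul0r.
  have : hold c z by apply: H; apply: List.in_or_app; left; apply/List.filter_In; rewrite Hc0.
  by rewrite (hold_split v) Hc0 mul0r.
have Hcomb p q : List.In p L -> 0 < p.1 v -> List.In q L -> q.1 v < 0 ->
   (- q.1 v) * Rs v p z + p.1 v * Rs v q z <= (- q.1 v) * p.2 + p.1 v * q.2.
  move=> Hp Hp0 Hq Hq0.
  have : hold (comb v p q) z.
    apply: H; apply: List.in_or_app; right; apply/List.in_flat_map; exists p; split.
      by apply/List.filter_In.
    by apply/List.in_map_iff; exists q; split => //; apply/List.filter_In.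
  rewrite (hold_split v) Rs_comb.
  have -> : (comb v p q).1 v = 0 by rewrite /=; ring.
  by rewrite mul0r add0r.
case EN : N => [|q1 N'].
  case EP : P => [|p1 P'].
    exists 0 => c Hc.
    case: (ltgtP (c.1 v) 0) => Hc0; last exact: HZ.
      have : List.In c N by apply/List.filter_In.
      by rewrite EN.
    have : List.In c P by apply/List.filter_In.
    by rewrite EP.
  have [p0 Hp0 Hm] := ex_min (fun p : lc => (p.2 - Rs v p z) / p.1 v) (or_introl erefl : List.In p1 (p1 :: P')).
  rewrite -EP in Hp0; move/List.filter_In: Hp0 => [Hp0 Hp00].
  exists ((p0.2 - Rs v p0 z) / p0.1 v) => c Hc.
  case: (ltgtP (c.1 v) 0) => Hc0; last exact: HZ.
    have : List.In c N by apply/List.filter_In.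
    by rewrite EN.
  have Hc' : List.In c (p1 :: P') by rewrite -EP; apply/List.filter_In.
  have := Hm _ Hc' => /= Hle.
  rewrite hold_upd.
  have := ler_wpM2l (ltW Hc0) Hle.
  rewrite [X in _ <= X]mulrC divfK ?gt_eqF // => Hle2.
  lra.
have [q0 Hq0 Hm] := ex_max (fun q : lc => (q.2 - Rs v q z) / q.1 v) (or_introl erefl : List.In q1 (q1 :: N')).
rewrite -EN in Hq0; move/List.filter_In: Hq0 => [Hq0 Hq00].
set u := (q0.2 - Rs v q0 z) / q0.1 v.
have eu : q0.1 v * u = q0.2 - Rs v q0 z by rewrite /u mulrC divfK ?lt_eqF.
exists u => c Hc.
rewrite hold_upd.
case: (ltgtP (c.1 v) 0) => Hc0; last by have := HZ c u Hc Hc0; rewrite hold_upd.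
  have Hc' : List.In c (q1 :: N') by rewrite -EN; apply/List.filter_In.
  have := Hm _ Hc' => /= Hle.
  have := ler_wnM2l (ltW Hc0) Hle.
  rewrite [X in _ <= X]mulrC divfK ?lt_eqF // => Hle2.
  rewrite -/u in Hle2; lra.
have Hc1 := Hcomb c q0 Hc Hc0 Hq0 Hq00.
have nq : 0 < - q0.1 v by rewrite oppr_gt0.
rewrite -(ler_pM2l nq).
have -> : - q0.1 v * (c.1 v * u + Rs v c z) = - c.1 v * (q0.1 v * u) + (- q0.1 v) * Rs v c z by ring.
rewrite eu.
lra.
Qed.

Definition over (V : seq I) (w z : I -> rat) := fun i => if i \in V then w i else z i.

Lemma elim (V : seq I) (L : seq lc) : exists L' : seq lc,
  (forall c, List.In c L' -> forall v, v \in V -> c.1 v = 0) /\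
  forall z, allh L' z <-> exists w, allh L (over V w z).
Proof.
elim: V L => [|v V IH] L.
  exists L; split => // z; split => [H|[w H]].
    by exists z; apply: allh_ext H.
  by apply: allh_ext H.
have [L1 [HL1 E1]] := IH L.
have [L2 [Hz [Hv E2]]] := fm L1 v.
exists L2; split.
  move=> c Hc w; rewrite inE => /orP [/eqP -> | Hw]; first exact: Hv.
  by apply: (Hz w) => // c' Hc'; apply: HL1.
move=> z; rewrite E2; split.
  move=> [u /E1 [w H]].
  exists (fun i => if i \in V then w i else u).
  apply: allh_ext H => i; rewrite /over /upd inE.
  by case: (i \in V); case: (i == v) => //=.
move=> [w H]; exists (w v); apply/E1; exists w.
apply: allh_ext H => i; rewrite /over /upd inE.
by case: (i \in V); case: eqP => [->|] //=.
Qed.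
End FM.


Lemma proj (I : finType) (L : seq (lc I)) (f : I -> rat) : exists L1 : seq (rat * rat),
  forall t, (forall c, List.In c L1 -> c.1 * t <= c.2) <->
     exists z, allh L z /\ \sum_i f i * z i = t.
Proof.
pose J := (I + 'I_1)%type.
pose emb (c : lc I) : lc J := (fun o => match o with inl i => c.1 i | inr _ => 0 end, c.2).
pose cup : lc J := (fun o => match o with inl i => f i | inr _ => -1 end, 0).
pose clo : lc J := (fun o => match o with inl i => - f i | inr _ => 1 end, 0).
pose La := cup :: clo :: List.map emb L.
pose V := enum [pred o : J | if o is inl _ then true else false].
have sumJ (F : J -> rat) : \sum_o F o = \sum_i F (inl i) + F (inr ord0).
  by rewrite big_sumType big_ord1.
have [L' [HL' E']] := elim V La.
have hL' c z : List.In c L' -> hold c z <-> c.1 (inr ord0) * z (inr ord0) <= c.2.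
  move=> Hc; rewrite /hold sumJ big1 ?add0r // => i _.
  by rewrite (HL' c Hc (inl i)) ?mul0r // mem_enum.
exists (List.map (fun c : lc J => (c.1 (inr ord0), c.2)) L') => t.
pose zt : J -> rat := fun o => if o is inr _ then t else 0.
split.
  move=> H.
  have : allh L' zt.
    move=> c Hc; apply/(hL' _ _ Hc); apply: (H (c.1 (inr ord0), c.2)).
    by apply/List.in_map_iff; exists c.
  move/E' => [w Hw].
  have eo i : over V w zt (inl i) = w (inl i) by rewrite /over mem_enum.
  have eo2 : over V w zt (inr ord0) = t by rewrite /over mem_enum.
  exists (fun i => w (inl i)); split.
    move=> c Hc; have := Hw (emb c) (or_intror (or_intror (List.in_map _ _ _ Hc))).
    rewrite /hold sumJ /= mul0r addr0.
    by under eq_bigr do rewrite eo.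
  have := Hw cup (or_introl erefl); have := Hw clo (or_intror (or_introl erefl)).
  have es (g : I -> rat) : \sum_i g i * over V w zt (inl i) = \sum_i g i * w (inl i).
    by apply: eq_bigr => i _; rewrite eo.
  rewrite /hold !sumJ /= eo2 !es.
  have eN : \sum_i - f i * w (inl i) = - \sum_i f i * w (inl i).
    by rewrite -sumrN; apply: eq_bigr => i _; rewrite mulNr.
  rewrite eN; lra.
move=> [z [Hz Hft]].
have : allh L' zt.
  apply/E'; exists (fun o => if o is inl i then z i else t).
  apply: (@allh_ext _ _ (fun o => if o is inl i then z i else t)).
    by move=> [i|j]; rewrite /over mem_enum //= /zt; case: j => -[].
  move=> c [<-|[<-|]].
  - by rewrite /hold sumJ /= Hft; lra.
  - rewrite /hold sumJ /=.
    have eN : \sum_i - f i * z i = - \sum_i f i * z i.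
      by rewrite -sumrN; apply: eq_bigr => i _; rewrite mulNr.
    by rewrite eN Hft; lra.
  move/List.in_map_iff => [c0 [<- Hc0]].
  have := Hz c0 Hc0; rewrite /hold sumJ /= mul0r addr0 //.
move=> H c /List.in_map_iff [c0 [<- Hc0]].
by have := H c0 Hc0; rewrite (hL' _ _ Hc0).
Qed.

Local Open Scope ereal_scope.

Lemma lub_empty (S : Qbar -> Prop) : (forall v, ~ S v) -> is_lub S -oo.
Proof.
move=> H; split; first by move=> u /H.
by move=> w _; exact: leNye.
Qed.

Lemma is_lub_ext (S1 S2 : Qbar -> Prop) v : (forall u, S1 u <-> S2 u) ->
  is_lub S1 v -> is_lub S2 v.
Proof.
move=> e [H1 H2]; split; first by move=> u /e /H1.
by move=> w Hw; apply: H2 => u /e /Hw.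
Qed.

Lemma lub1 (L1 : seq (rat * rat)) : exists v,
  is_lub (fun v => exists t, (forall c, List.In c L1 -> (c.1 * t <= c.2)%R) /\ v = t%:E) v.
Proof.
set P := fun t => forall c, List.In c L1 -> (c.1 * t <= c.2)%R.
case: (classic (exists t, P t)) => [[t0 Ht0]|Hne]; last first.
  by exists -oo; apply: lub_empty => v [t [Ht _]]; apply: Hne; exists t.
case: (classic (exists c, List.In c L1 /\ (0 < c.1)%R)) => [[c1 [Hc1 Hc1p]]|Hnp].
  pose Pl := List.filter (fun c : rat * rat => (0 < c.1)%R) L1.
  have Hc1' : List.In c1 Pl by apply/List.filter_In.
  have [p0 Hp0 Hm] := ex_min (fun c : rat * rat => (c.2 / c.1)%R) Hc1'.
  move/List.filter_In: Hp0 => [Hp0 Hp0p].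
  set U := (p0.2 / p0.1)%R.
  have HU t : P t -> (t <= U)%R.
    by move=> Ht; rewrite /U ler_pdivlMr // mulrC; apply: Ht.
  have PU : P U.
    move=> c Hc; case: (ltgtP c.1 0%R) => Hc0.
    - apply: le_trans _ (Ht0 c Hc); exact: (ler_wnM2l (ltW Hc0) (HU _ Ht0)).
    - have := Hm c (proj2 (List.filter_In _ _ _) (conj Hc Hc0)) => /=.
      by rewrite -/U ler_pdivlMr // mulrC.
    - by have := Ht0 c Hc; rewrite Hc0 !mul0r.
  exists U%:E; split.
    by move=> u [t [Ht ->]]; rewrite lee_fin; exact: HU.
  by move=> w Hw; apply: Hw; exists U.
exists +oo; split; first by move=> u _; exact: leey.
move=> w Hw; case: w Hw => [r| |] Hw //.
  exfalso.
  pose t := (`|r| + `|t0| + 1)%R.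
  have Pt : P t.
    move=> c Hc; have c0 : (c.1 <= 0)%R.
      by rewrite leNgt; apply/negP => h; apply: Hnp; exists c.
    apply: le_trans _ (Ht0 c Hc); apply: (ler_wnM2l c0).
    have := ler_norm t0; have := normr_ge0 r; rewrite /t; lra.
  have := Hw t%:E (ex_intro _ t (conj Pt erefl)); rewrite lee_fin.
  have h1 : (r <= `|r|)%R := ler_norm r.
  have h2 : (0 <= `|t0|)%R := normr_ge0 t0.
  rewrite /t; lra.
by have := Hw t0%:E (ex_intro _ t0 (conj Ht0 erefl)).
Qed.

Lemma In_mem (T : eqType) (x : T) (s : seq T) : x \in s -> List.In x s.
Proof. by elim: s => [|a s IH] //=; rewrite in_cons => /orP [/eqP ->|/IH]; [left|right]. Qed.

Lemma Arow_sum m l (A : 'M[rat]_(l, m)) j x : Arow A j x = (\sum_a A j a * x a 0)%R.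
Proof. by rewrite /Arow mxE. Qed.

Lemma sumI0 (a b c : rat) : b = 0%R -> c = 0%R -> (a + b + c = a)%R.
Proof. by move=> -> ->; rewrite !addr0. Qed.
Lemma sumI0' (a b c : rat) : a = 0%R -> c = 0%R -> (a + b + c = b)%R.
Proof. by move=> -> ->; rewrite add0r addr0. Qed.

Lemma S_lub (m E l : nat) (A : 'M[rat]_(l, m)) (S : linsys m E) (rb : 'I_l -> Qbar)
  (i' : 'I_l) : exists v, is_lub (fun v => exists x x' y, lsat S x x' y /\
     (forall j, (Arow A j x)%:E <= rb j) /\ v = (Arow A i' x')%:E) v.
Proof.
case: (classic (exists j, rb j = -oo)) => [[j0 Hj0]|Hno].
  exists -oo; apply: lub_empty => v [x [x' [y [_ [H _]]]]].
  by have := H j0; rewrite Hj0.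
pose I := (('I_m + 'I_m) + 'I_E)%type.
have sumI (F : I -> rat) : (\sum_o F o = \sum_a F (inl (inl a)) + \sum_a F (inl (inr a))
    + \sum_e F (inr e))%R by rewrite !big_sumType.
pose rowc (k : 'I_(nc S)) : lc I := (fun o => match o with inl (inl a) => Cx S k a
   | inl (inr a) => Cx' S k a | inr a => Cy S k a end, (cc S k 0)%R).
pose bndc j (r : rat) : lc I := (fun o => match o with inl (inl a) => A j a | _ => 0%R end, r).
pose L := List.map rowc (enum 'I_(nc S)) ++
   List.flat_map (fun j => match rb j with r%:E => [:: bndc j r] | _ => [::] end) (enum 'I_l).
pose f (o : I) := match o with inl (inr a) => A i' a | _ => 0%R end.
have [L1 HL1] := proj L f.
have [v Hv] := lub1 L1.
exists v; apply: is_lub_ext Hv => u; split.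
  move=> [t [/HL1 [z [Hz Hft]] ->]].
  exists (\col_a z (inl (inl a))), (\col_a z (inl (inr a))), (\col_e z (inr e)).
  split; [|split].
  - move=> k; have := Hz (rowc k) (List.in_or_app _ _ _ (or_introl
       (List.in_map _ _ _ (In_mem (mem_enum _ k))))).
    rewrite /hold sumI /= !mxE.
    congr (_ + _ + _ <= _)%R; apply: eq_bigr => a _; by rewrite !mxE.
  - move=> j; case E0 : (rb j) => [r| |]; last by exfalso; apply: Hno; exists j.
      have Hin : List.In (bndc j r) L.
        apply: List.in_or_app; right; apply/List.in_flat_map; exists j; split.
          exact: In_mem (mem_enum _ j).
        by rewrite E0; left.
      have := Hz _ Hin.
      rewrite /hold sumI /= lee_fin Arow_sum.
      rewrite sumI0; [|by rewrite big1 // => e _; rewrite mul0r|by rewrite big1 // => e _; rewrite mul0r].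
      by congr (_ <= _)%R; apply: eq_bigr => a _; rewrite mxE.
    exact: leey.
  - rewrite -Hft sumI /= Arow_sum.
    rewrite sumI0'; [|by rewrite big1 // => e _; rewrite mul0r|by rewrite big1 // => e _; rewrite mul0r].
    by congr (_%:E); apply: eq_bigr => a _; rewrite mxE.
move=> [x [x' [y [Hs [Hb ->]]]]].
exists (Arow A i' x'); split => //; apply/HL1.
exists (fun o : I => match o with inl (inl a) => x a 0 | inl (inr a) => x' a 0
   | inr e => y e 0 end)%R; split.
  move=> c Hc; case: (List.in_app_or _ _ _ Hc) => [/List.in_map_iff [k [<- _]]|].
    have := Hs k; rewrite /hold sumI /= !mxE //.
  move=> /List.in_flat_map [j [_]].
  case E0 : (rb j) => [r| |] //= [] // <-.
  have := Hb j; rewrite E0 lee_fin Arow_sum /hold sumI /=.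
  by rewrite sumI0; [|by rewrite big1 // => e _; rewrite mul0r|by rewrite big1 // => e _; rewrite mul0r].
rewrite sumI /= Arow_sum.
by rewrite sumI0'; [|by rewrite big1 // => e _; rewrite mul0r|by rewrite big1 // => e _; rewrite mul0r].
Qed.

Lemma qsup_spec (S : Qbar -> Prop) : (exists v, is_lub S v) -> is_lub S (qsup S).
Proof. by move=> H; rewrite /qsup; apply: epsilon_spec. Qed.

Lemma qsup_mono (S1 S2 : Qbar -> Prop) : (forall u, S1 u -> S2 u) ->
  (exists v, is_lub S1 v) -> (exists v, is_lub S2 v) -> qsup S1 <= qsup S2.
Proof.
move=> H /qsup_spec [_ H1] /qsup_spec [H2 _].
by apply: H1 => u /H /H2.
Qed.

Lemma Psi_mono (m n d E l : nat) (A : 'M[rat]_(l, m)) (T : Bvec d -> linsys m E)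
  (st : strategy l n d) r1 r2 : le_fun r1 r2 -> le_fun (Psi A T st r1) (Psi A T st r2).
Proof.
move=> H i b; rewrite /Psi; case: (st i b) => [[s p]|] //.
apply: qsup_mono.
- move=> u [x [x' [y [H1 [H2 H3]]]]]; exists x, x', y; split => //; split => // j.
  exact: le_trans (H2 j) (H j s).
- exact: (S_lub A (T p) (fun j => r1 j s) i).
- exact: (S_lub A (T p) (fun j => r2 j s) i).
Qed.

Lemma crep_spec (l n d : nat) (st : strategy l n d) i b :
  st i (crep (cls_of st i b)) = st i b.
Proof.
rewrite /crep /=; case: pickP => [b' |H] /=.
  by rewrite inE => /eqP.
by have := H b; rewrite inE eqxx.
Qed.

Lemma cls_ofP (l n d : nat) (st : strategy l n d) i (C : cls st i) :
  exists b, C = cls_of st i b.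
Proof.
case: C => C HC; have := HC; case/imsetP => b _ EC.
exists b; subst C; rewrite /cls_of; congr exist; exact: bool_irrelevance.
Qed.

Theorem mainTheorem2 (m n d E l : nat) (A : 'M[rat]_(l, m))
  (T : Bvec d -> linsys m E) (st : strategy l n d)
  (rho_k rho_k1 : 'I_l -> Bvec n -> Qbar)
  (rhat1 rhohat : forall i : 'I_l, cls st i -> Qbar) :
  le_fun rho_k (Psi A T st rho_k) ->
  least_fp_above (@le_fun l n) (Psi A T st) rho_k rho_k1 ->
  (forall i b, rhat1 i (cls_of st i b) = Psi A T st rho_k i b) ->
  least_fp_above (@le_dfun l (cls st)) (Psihat A T st) rhat1 rhohat ->
  forall i b, rho_k1 i b = rhohat i (cls_of st i b).
Proof.
move=> Hk [F1 [L1 M1]] Hr1 [F2 [L2 M2]] i b.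
pose rho' i b := rhohat i (cls_of st i b).
have Fr' : Psi A T st rho' = rho'.
  apply: functional_extensionality_dep => i'; apply: functional_extensionality => b'.
  rewrite {2}/rho'; have := congr1 (fun r => r i' (cls_of st i' b')) F2 => /= <-.
  by rewrite /Psihat crep_spec /Psi.
have Lr' : le_fun rho_k rho'.
  move=> i' b'; apply: le_trans (Hk i' b') _; rewrite -Hr1; exact: L2.
have le1 := M1 _ Fr' Lr'.
have F1' j b' : Psi A T st rho_k1 j b' = rho_k1 j b' by rewrite F1.
have cst j b1 b2 : st j b1 = st j b2 -> rho_k1 j b1 = rho_k1 j b2.
  by move=> e; rewrite -F1' -(F1' j b2) /Psi e.
pose r j (C : cls st j) := rho_k1 j (crep C).
have rcls j b' : r j (cls_of st j b') = rho_k1 j b' by apply: cst; exact: crep_spec.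
have Fr : Psihat A T st r = r.
  apply: functional_extensionality_dep => j; apply: functional_extensionality => C.
  have [b' ->] := cls_ofP C.
  rewrite rcls -F1' /Psihat crep_spec /Psi; case: (st j b') => [[s p]|] //.
  congr qsup; apply: functional_extensionality => v; apply: propositional_extensionality.
  split => -[x [x' [y [H1 [H2 H3]]]]]; exists x, x', y; split => //; split => // j' .
    by rewrite -rcls.
  by rewrite rcls.
have Lr : le_dfun rhat1 r.
  move=> j C; have [b' ->] := cls_ofP C; rewrite Hr1 rcls -F1'; exact: Psi_mono L1 j b'.
have le2 := M2 _ Fr Lr.
apply/le_anti/andP; split; first exact: le1.
by have := le2 i (cls_of st i b); rewrite rcls.
Qed.
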